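(* Consider a multi-agent Markov game with agents $\mathcal N=\{1,\dots,n\}$, finite local state spaces $\mathcal S_i$ and action spaces $\mathcal A_i$, bounded rewards $r_i:\mathcal S\times\mathcal A\to\mathbb R$, discount $\gamma\in(0,1)$, and local policies $\xi_i:\mathcal S_i\to\Delta(\mathcal A_i)$ (joint policy $\xi(a\mid s)=\prod_i\xi_i(a_i\mid s_i)$). Suppose that (i) the transitions are completely local: given $(s(t),a(t))$, the components $s_i(t+1)$ are drawn independently with $s_i(t+1)\sim P_i(\cdot\mid s_i(t),a_i(t))$; (ii) the one-shot game is a potential game: there is $\phi:\mathcal S\times\mathcal A\to\mathbb R$ such that for all $i$, all $(s_i,a_i),(s_i',a_i')\in\mathcal S_i\times\mathcal A_i$ and all $(s_{-i},a_{-i})$, $r_i(s_i,a_i,s_{-i},a_{-i})-r_i(s_i',a_i',s_{-i},a_{-i})=\phi(s_i,a_i,s_{-i},a_{-i})-\phi(s_i',a_i',s_{-i},a_{-i})$. Then there is a function $\Phi:\Xi\times\mathcal S\to\mathbb R$ (namely $\Phi^\xi(s)=\sum_{t\ge0}\gamma^t\mathbb E_\xi[\phi(s(t),a(t))\mid s(0)=s]$) such that for every agent $i$, all $\xi_i,\xi_i'\in\Xi_i$, all $\xi_{-i}\in\Xi_{-i}$ and all $s\in\mathcal S$, $$V_i^{\xi_i,\xi_{-i}}(s)-V_i^{\xi_i',\xi_{-i}}(s)=\Phi^{\xi_i,\xi_{-i}}(s)-\Phi^{\xi_i',\xi_{-i}}(s).$$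
   Context: $\Xi_i$ denotes the set of local policies of agent $i$, $\Xi=\prod_i\Xi_i$, $\Xi_{-i}=\prod_{j\ne i}\Xi_j$. $V_i^\xi(s)=\sum_{t\ge0}\gamma^t\mathbb E_\xi[r_i(s(t),a(t))\mid s(0)=s]$, where $a(t)\sim\xi(\cdot\mid s(t))$. *)

(* Defs.v *)
From HB Require Import structures.
From mathcomp Require Import all_boot all_order all_algebra.
From mathcomp Require Import all_classical all_reals all_analysis.
Set Implicit Arguments. Unset Strict Implicit. Unset Printing Implicit Defensive.
Import Order.TTheory GRing.Theory Num.Theory.
Local Open Scope ring_scope.

Section MarkovGame.
Variables (R : realType) (n : nat) (S A : 'I_n -> finType).

Definition jstate := {dffun forall i : 'I_n, S i}.
Definition jaction := {dffun forall i : 'I_n, A i}.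

Definition is_local_policy (i : 'I_n) (p : S i -> A i -> R) : Prop :=
  forall si, (forall ai, 0 <= p si ai) /\ \sum_(ai : A i) p si ai = 1.

Definition is_local_kernel (i : 'I_n) (P : S i -> A i -> S i -> R) : Prop :=
  forall si ai, (forall si', 0 <= P si ai si') /\ \sum_(si' : S i) P si ai si' = 1.

Definition profile := forall i : 'I_n, S i -> A i -> R.

Definition joint_policy (xi : profile) (s : jstate) (a : jaction) : R :=
  \prod_(i < n) xi i (s i) (a i).

Definition joint_kernel (P : forall i, S i -> A i -> S i -> R)
  (s : jstate) (a : jaction) (s' : jstate) : R :=
  \prod_(i < n) P i (s i) (a i) (s' i).

Fixpoint state_dist (P : forall i, S i -> A i -> S i -> R) (xi : profile)
  (s0 : jstate) (t : nat) : jstate -> R :=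
  match t with
  | 0 => fun s => if s == s0 then 1 else 0
  | t'.+1 => fun s' => \sum_(s : jstate) state_dist P xi s0 t' s *
        \sum_(a : jaction) joint_policy xi s a * joint_kernel P s a s'
  end.

Definition exp_stage (P : forall i, S i -> A i -> S i -> R) (xi : profile)
  (f : jstate -> jaction -> R) (s0 : jstate) (t : nat) : R :=
  \sum_(s : jstate) state_dist P xi s0 t s *
     \sum_(a : jaction) joint_policy xi s a * f s a.

Definition value (P : forall i, S i -> A i -> S i -> R) (gamma : R) (xi : profile)
  (f : jstate -> jaction -> R) (s0 : jstate) : R :=
  limn (fun N : nat => \sum_(0 <= t < N) gamma ^+ t * exp_stage P xi f s0 t).

Definition upd_state (s : jstate) (i : 'I_n) (x : S i) : jstate :=
  @finfun _ (fun j => S j) (@dfwith _ (fun j => S j) (fun k => s k) i x).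
Definition upd_action (a : jaction) (i : 'I_n) (x : A i) : jaction :=
  @finfun _ (fun j => A j) (@dfwith _ (fun j => A j) (fun k => a k) i x).
Definition upd_policy (xi : profile) (i : 'I_n) (p : S i -> A i -> R) : profile :=
  @dfwith _ (fun j => S j -> A j -> R) xi i p.

End MarkovGame.

(* Main.v *)
Require Import Defs.
From HB Require Import structures.
From mathcomp Require Import all_boot all_order all_algebra.
From mathcomp Require Import all_classical all_reals all_analysis.
From mathcomp Require Import ring lra.
Import Order.TTheory GRing.Theory Num.Theory.
Import numFieldNormedType.Exports.
Local Open Scope ring_scope.

Lemma sum_prod_dffun (R : comNzRingType) (I : finType) (T : I -> finType)
  (F : forall i, T i -> R) :
  \sum_(x : {dffun forall i, T i}) \prod_i F i (x i) = \prod_i \sum_(y : T i) F i y.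
Proof.
rewrite (reindex (@dffun_of_fprod I T)); last exact/onW_bij/dffun_of_fprod_bij.
have H := @big_fprod R 0 1 *%R +%R I T (fun i => [ffun y => F i y]).
transitivity (\big[+%R/0]_(t : fprod T) \prod_(i in I) [ffun y => F i y] (t i)).
  by apply: eq_bigr => t _; apply: eq_bigr => i _; rewrite !ffunE.
rewrite H. rewrite -(bigA_distr_big_dep _ (fun i (u : {i : I & T i}) => untag 0 [ffun y => F i y] u)). apply: eq_bigr => i _.
transitivity (\sum_(y : T i) [ffun y => F i y] y); last by apply: eq_bigr => y _; rewrite ffunE.
by rewrite (big_tag (fun i => [ffun y => F i y])). Qed.

Section Upd.
Variables (I : finType) (T : I -> finType).
Definition updg (x : {dffun forall j, T j}) (i : I) (y : T i) : {dffun forall j, T j} :=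
  @finfun _ T (@dfwith _ T (fun k => x k) i y).
Arguments updg x [i] y.

Lemma updg_at x i (y : T i) : updg x y i = y.
Proof. by rewrite /updg ffunE; apply: dfwith_in. Qed.

Lemma updg_out x i (y : T i) j : j != i -> updg x y j = x j.
Proof. by move=> ji; rewrite /updg ffunE; apply: dfwith_out; rewrite eq_sym. Qed.

Lemma updgK x i (y y' : T i) : updg (updg x y) y' = updg x y'.
Proof.
apply/ffunP => j; have [->|ji] := eqVneq j i; first by rewrite !updg_at.
by rewrite !updg_out.
Qed.

Lemma updg_id x i : updg x (x i) = x.
Proof.
apply/ffunP => j; have [->|ji] := eqVneq j i; first by rewrite !updg_at.
by rewrite !updg_out.
Qed.

Lemma swap_sum (R : comNzRingType) i (w w' : T i -> R) (G : {dffun forall j, T j} -> R) :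
  \sum_y w y = 1 -> \sum_y w' y = 1 -> (forall x (y : T i), G (updg x y) = G x) ->
  \sum_(x : {dffun forall j, T j}) w (x i) * G x = \sum_(x : {dffun forall j, T j}) w' (x i) * G x.
Proof.
move=> w1 w'1 HG.
transitivity (\sum_(x : {dffun forall j, T j}) \sum_z w' z * (w (x i) * G x)).
  by apply: eq_bigr => x _; rewrite -big_distrl /= w'1 mul1r.
transitivity (\sum_(x : {dffun forall j, T j}) \sum_z w z * (w' (x i) * G x)); last first.
  by apply: eq_bigr => x _; rewrite -big_distrl /= w1 mul1r.
rewrite !pair_bigA /=.
pose h (p : {dffun forall j, T j} * T i) := (updg p.1 p.2, p.1 i).
have hK : involutive h.
  by case=> x y; rewrite /h /= updgK updg_id updg_at.
rewrite (reindex_inj (inv_inj hK)) /=.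
apply: eq_bigr => -[x y] _ /=.
by rewrite updg_at HG mulrA mulrA (mulrC (w' _)).
Qed.
End Upd.
Arguments updg {I T} x [i] y.
Arguments swap_sum {I T R i} w w' G.
Arguments updg_id {I T} x i.
Arguments updg_at {I T} x i y.
Arguments updg_out {I T} x i y j _.

Lemma le_sum_term (R : numDomainType) (I : finType) (F : I -> R) j :
  (forall i, 0 <= F i) -> F j <= \sum_i F i.
Proof. by move=> F0; rewrite (bigD1 j) //= lerDl sumr_ge0. Qed.
Arguments le_sum_term {R I} F j.

Section Main.
Variables (R : realType) (n : nat) (S A : 'I_n -> finType)
  (P : forall i : 'I_n, S i -> A i -> S i -> R).
Local Notation JS := (jstate S).
Local Notation JA := (jaction A).

Lemma step_eq (xi : profile R S A) s0 t (g : JS -> R) :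
  \sum_s' state_dist P xi s0 t.+1 s' * g s' =
  \sum_s state_dist P xi s0 t s *
    \sum_a joint_policy xi s a * (\sum_s' joint_kernel P s a s' * g s').
Proof.
rewrite /=.
under eq_bigr do rewrite big_distrl /=.
rewrite exchange_big /=; apply: eq_bigr => s _.
under eq_bigr do rewrite -mulrA.
rewrite -big_distrr /=; congr (_ * _).
under eq_bigr do rewrite big_distrl /=.
rewrite exchange_big /=; apply: eq_bigr => a _.
rewrite big_distrr /=; apply: eq_bigr => s' _.
by rewrite mulrA.
Qed.

Definition valid (xi : profile R S A) := forall j, is_local_policy (xi j).
Definition kvalid := forall j, is_local_kernel (P j).

Lemma pol_ge0 xi s a : valid xi -> 0 <= joint_policy xi s a.
Proof. by move=> v; apply: prodr_ge0 => j _; case: (v j (s j)). Qed.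

Lemma pol_sum1 xi s : valid xi -> \sum_a joint_policy xi s a = 1.
Proof.
move=> v; rewrite /joint_policy.
rewrite (@sum_prod_dffun _ _ _ (fun j (y : A j) => xi j (s j) y)).
by apply: big1 => j _; case: (v j (s j)).
Qed.

Lemma ker_ge0 s a s' : kvalid -> 0 <= joint_kernel P s a s'.
Proof. by move=> v; apply: prodr_ge0 => j _; case: (v j (s j) (a j)). Qed.

Lemma ker_sum1 s a : kvalid -> \sum_s' joint_kernel P s a s' = 1.
Proof.
move=> v; rewrite /joint_kernel.
rewrite (@sum_prod_dffun _ _ _ (fun j (y : S j) => P j (s j) (a j) y)).
by apply: big1 => j _; case: (v j (s j) (a j)).
Qed.

Lemma dist_ge0 xi s0 t s : valid xi -> kvalid -> 0 <= state_dist P xi s0 t s.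
Proof.
move=> v kv; elim: t s => [|t IH] s /=; first by case: (s == s0).
apply: sumr_ge0 => s1 _; apply: mulr_ge0 => //; apply: sumr_ge0 => a _.
by apply: mulr_ge0; [apply: pol_ge0|apply: ker_ge0].
Qed.

Lemma dist_sum1 xi s0 t : valid xi -> kvalid -> \sum_s state_dist P xi s0 t s = 1.
Proof.
move=> v kv; elim: t => [|t IH].
  by rewrite /= (bigD1 s0) //= eqxx big1 ?addr0 // => s /negbTE ->.
transitivity (\sum_s' state_dist P xi s0 t.+1 s' * (fun _ => 1) s').
  by apply: eq_bigr => s _; rewrite mulr1.
rewrite step_eq -[RHS]IH; apply: eq_bigr => s _.
under eq_bigr do under eq_bigr do rewrite mulr1.
under eq_bigr do rewrite ker_sum1 // mulr1.
by rewrite pol_sum1 // mulr1.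
Qed.

Lemma exp_bound xi (f : JS -> JA -> R) s0 t : valid xi -> kvalid ->
  `|exp_stage P xi f s0 t| <= \sum_s \sum_a `|f s a|.
Proof.
move=> v kv; set B := \sum_s \sum_a `|f s a|.
have fB s a : `|f s a| <= B.
  apply: (le_trans _ (le_sum_term (fun s => \sum_a `|f s a|) s _)); last by move=> ?; apply: sumr_ge0.
  by apply: (le_sum_term (fun a => `|f s a|)).
rewrite /exp_stage; apply: le_trans (ler_norm_sum _ _ _) _.
apply: le_trans (_ : \sum_s state_dist P xi s0 t s * B <= _); last first.
  by rewrite -big_distrl /= dist_sum1 // mul1r.
apply: ler_sum => s _; rewrite normrM ger0_norm ?dist_ge0 //.
apply: ler_wpM2l; first exact: dist_ge0.
apply: le_trans (ler_norm_sum _ _ _) _.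
rewrite -[B]mul1r -(pol_sum1 xi s v) big_distrl /=.
apply: ler_sum => a _; rewrite normrM ger0_norm ?pol_ge0 //.
by apply: ler_wpM2l; [apply: pol_ge0|].
Qed.

Lemma cvg_value xi (f : JS -> JA -> R) s0 (gamma : R) : valid xi -> kvalid ->
  0 <= gamma < 1 ->
  cvgn (series (fun t => gamma ^+ t * exp_stage P xi f s0 t)).
Proof.
move=> v kv /andP[g0 g1].
apply: normed_cvg.
set B := \sum_s \sum_a `|f s a|.
have B0 : 0 <= B by apply: sumr_ge0 => s _; apply: sumr_ge0.
apply: (@series_le_cvg _ _ (geometric B gamma)).
- by move=> k /=.
- by move=> k /=; apply: mulr_ge0 => //; apply: exprn_ge0.
- move=> k /=; rewrite normrM ger0_norm ?exprn_ge0 // mulrC.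
  by apply: ler_wpM2r; [rewrite exprn_ge0|apply: exp_bound].
- by apply: is_cvg_geometric_series; rewrite ger0_norm.
Qed.

Definition Qpol (xi : profile R S A) (i : 'I_n) (s : JS) (a : JA) :=
  \prod_(j < n | j != i) xi j (s j) (a j).
Definition Qk (i : 'I_n) (s : JS) (a : JA) (s' : JS) :=
  \prod_(j < n | j != i) P j (s j) (a j) (s' j).

Lemma upd_policy_at (xi : profile R S A) i (p : S i -> A i -> R) : @upd_policy _ _ _ _ xi i p i = p.
Proof. exact: dfwith_in. Qed.

Lemma upd_policy_out (xi : profile R S A) i (p : S i -> A i -> R) j : j != i -> @upd_policy _ _ _ _ xi i p j = xi j.
Proof. by move=> ji; apply: dfwith_out; rewrite eq_sym. Qed.

Lemma pol_split xi i (p : S i -> A i -> R) s a :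
  joint_policy (upd_policy xi p) s a = p (s i) (a i) * Qpol xi i s a.
Proof.
rewrite /joint_policy (bigD1 i) //= upd_policy_at; congr (_ * _).
by apply: eq_bigr => j ji; rewrite upd_policy_out.
Qed.

Lemma ker_split i s a s' :
  joint_kernel P s a s' = P i (s i) (a i) (s' i) * Qk i s a s'.
Proof. by rewrite /joint_kernel (bigD1 i). Qed.

Lemma Qpol_updS xi i s a (x : S i) : Qpol xi i (updg s x) a = Qpol xi i s a.
Proof. by apply: eq_bigr => j ji; rewrite updg_out. Qed.
Lemma Qpol_updA xi i s a (x : A i) : Qpol xi i s (updg a x) = Qpol xi i s a.
Proof. by apply: eq_bigr => j ji; rewrite updg_out. Qed.
Lemma Qk_updS i s a s' (x : S i) : Qk i (updg s x) a s' = Qk i s a s'.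
Proof. by apply: eq_bigr => j ji; rewrite updg_out. Qed.
Lemma Qk_updA i s a s' (x : A i) : Qk i s (updg a x) s' = Qk i s a s'.
Proof. by apply: eq_bigr => j ji; rewrite updg_out. Qed.
Lemma Qk_updT i s a s' (x : S i) : Qk i s a (updg s' x) = Qk i s a s'.
Proof. by apply: eq_bigr => j ji; rewrite updg_out. Qed.

Definition inv (i : 'I_n) (g : JS -> R) := forall s (x : S i), g (updg s x) = g s.
Definition inv2 (i : 'I_n) (H : JS -> JA -> R) :=
  (forall s a (x : S i), H (updg s x) a = H s a) /\
  (forall s a (y : A i), H s (updg a y) = H s a).

Lemma avg_eq xi i (p p' : S i -> A i -> R) H : is_local_policy p -> is_local_policy p' -> inv2 i H ->
  forall s, \sum_a joint_policy (upd_policy xi p) s a * H s a =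
            \sum_a joint_policy (upd_policy xi p') s a * H s a.
Proof.
move=> hp hp' [H1 H2] s.
under eq_bigr do rewrite pol_split -mulrA.
under [RHS]eq_bigr do rewrite pol_split -mulrA.
apply: (swap_sum (p (s i)) (p' (s i)) (fun a => Qpol xi i s a * H s a)).
- by case: (hp (s i)).
- by case: (hp' (s i)).
- by move=> a y; rewrite Qpol_updA H2.
Qed.

Lemma avg_inv xi i (p : S i -> A i -> R) H : is_local_policy p -> inv2 i H ->
  inv i (fun s => \sum_a joint_policy (upd_policy xi p) s a * H s a).
Proof.
move=> hp [H1 H2] s x /=.
under eq_bigr do rewrite pol_split -mulrA updg_at Qpol_updS H1.
under [RHS]eq_bigr do rewrite pol_split -mulrA.
apply: (swap_sum (p x) (p (s i)) (fun a => Qpol xi i s a * H s a)).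
- by case: (hp x).
- by case: (hp (s i)).
- by move=> a y; rewrite Qpol_updA H2.
Qed.

Lemma ker_inv i g : kvalid -> inv i g ->
  inv2 i (fun s a => \sum_s' joint_kernel P s a s' * g s').
Proof.
move=> kv gi; split => [s a x | s a y] /=.
- under eq_bigr do rewrite (ker_split i) -mulrA updg_at Qk_updS.
  under [RHS]eq_bigr do rewrite (ker_split i) -mulrA.
  apply: (swap_sum (P i x (a i)) (P i (s i) (a i)) (fun s' => Qk i s a s' * g s')).
  + by case: (kv i x (a i)).
  + by case: (kv i (s i) (a i)).
  + by move=> s' z; rewrite Qk_updT gi.
- under eq_bigr do rewrite (ker_split i) -mulrA updg_at Qk_updA.
  under [RHS]eq_bigr do rewrite (ker_split i) -mulrA.
  apply: (swap_sum (P i (s i) y) (P i (s i) (a i)) (fun s' => Qk i s a s' * g s')).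
  + by case: (kv i (s i) y).
  + by case: (kv i (s i) (a i)).
  + by move=> s' z; rewrite Qk_updT gi.
Qed.

Lemma dist_eq xi i (p p' : S i -> A i -> R) s0 t g : is_local_policy p -> is_local_policy p' ->
  kvalid -> inv i g ->
  \sum_s state_dist P (upd_policy xi p) s0 t s * g s =
  \sum_s state_dist P (upd_policy xi p') s0 t s * g s.
Proof.
move=> hp hp' kv; elim: t g => [|t IH] g gi; first by [].
rewrite !step_eq.
have h2 := ker_inv i g kv gi.
transitivity (\sum_s state_dist P (upd_policy xi p) s0 t s *
   \sum_a joint_policy (upd_policy xi p') s a * (\sum_s' joint_kernel P s a s' * g s')).
  by apply: eq_bigr => s _; rewrite (avg_eq _ _ _ _ _ hp hp' h2).
by apply: IH; apply: avg_inv.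
Qed.

Lemma exp_eq xi i (p p' : S i -> A i -> R) s0 t H : is_local_policy p -> is_local_policy p' ->
  kvalid -> inv2 i H ->
  exp_stage P (upd_policy xi p) H s0 t = exp_stage P (upd_policy xi p') H s0 t.
Proof.
move=> hp hp' kv h2; rewrite /exp_stage.
transitivity (\sum_s state_dist P (upd_policy xi p) s0 t s *
   \sum_a joint_policy (upd_policy xi p') s a * H s a).
  by apply: eq_bigr => s _; rewrite (avg_eq _ _ _ _ _ hp hp' h2).
by apply: dist_eq => //; apply: avg_inv.
Qed.

Lemma exp_add xi f g s0 t :
  exp_stage P xi (fun s a => f s a + g s a) s0 t =
  exp_stage P xi f s0 t + exp_stage P xi g s0 t.
Proof.
rewrite /exp_stage -big_split /=; apply: eq_bigr => s _.
rewrite -mulrDr -big_split /=; congr (_ * _); apply: eq_bigr => a _.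
by rewrite mulrDr.
Qed.

Lemma value_add xi f g s0 gamma : valid xi -> kvalid -> 0 <= gamma < 1 ->
  value P gamma xi (fun s a => f s a + g s a) s0 =
  value P gamma xi f s0 + value P gamma xi g s0.
Proof.
move=> v kv g01; rewrite /value.
have cf := cvg_value xi f s0 gamma v kv g01.
have cg := cvg_value xi g s0 gamma v kv g01.
rewrite -(lim_seriesD cf cg); do 3 f_equal; apply/funext => N.
rewrite /series /=; apply: eq_bigr => t _.
by rewrite exp_add mulrDr.
Qed.

Lemma valid_upd xi i (p : S i -> A i -> R) : is_local_policy p ->
  (forall j, j != i -> is_local_policy (xi j)) -> valid (upd_policy xi p).
Proof.
move=> hp hxi j; have [->|ji] := eqVneq j i; first by rewrite upd_policy_at.
by rewrite upd_policy_out //; apply: hxi.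
Qed.
End Main.

Theorem mainTheorem3 (R : realType) (n : nat) (S A : 'I_n -> finType)
  (P : forall i : 'I_n, S i -> A i -> S i -> R)
  (r : 'I_n -> jstate S -> jaction A -> R)
  (gamma : R)
  (phi : jstate S -> jaction A -> R) :
  0 < gamma < 1 ->
  (forall i, is_local_kernel (P i)) ->
  (forall (i : 'I_n) (s : jstate S) (a : jaction A) (si' : S i) (ai' : A i),
     r i s a - r i (upd_state s si') (upd_action a ai')
     = phi s a - phi (upd_state s si') (upd_action a ai')) ->
  let Phi := fun (xi : profile R S A) (s : jstate S) => value P gamma xi phi s in
  forall (i : 'I_n) (xi : profile R S A) (xi_i xi_i' : S i -> A i -> R),
    is_local_policy xi_i -> is_local_policy xi_i' ->
    (forall j : 'I_n, j != i -> is_local_policy (xi j)) ->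
    forall s : jstate S,
      value P gamma (upd_policy xi xi_i) (r i) s
        - value P gamma (upd_policy xi xi_i') (r i) s
      = Phi (upd_policy xi xi_i) s - Phi (upd_policy xi xi_i') s.
Proof.
move=> /andP[g0 g1] kv hr Phi i xi p p' hp hp' hxi s0; rewrite /Phi.
have g01 : 0 <= gamma < 1 by rewrite g1 ltW.
pose h := fun s a => r i s a - phi s a.
have hJ s a (x : S i) (y : A i) : h (updg s x) (updg a y) = h s a.
  have := hr i s a x y; rewrite /h.
  change (upd_state s x) with (updg s x); change (upd_action a y) with (updg a y).
  move=> E; lra.
have h2 : inv2 R n S A i h.
  split => [s a x | s a y].
  - by move: (hJ s a x (a i)); rewrite updg_id => ->.
  - by move: (hJ s a (s i) y); rewrite updg_id => ->.
have rE : r i = (fun s a => phi s a + h s a).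
  by apply/funext => s; apply/funext => a; rewrite /h addrC subrK.
have vp := @valid_upd R n S A xi i p hp hxi; have vp' := @valid_upd R n S A xi i p' hp' hxi.
clearbody h; rewrite rE !value_add //.
have -> : value P gamma (upd_policy xi p) h s0 = value P gamma (upd_policy xi p') h s0.
  rewrite /value; do 3 f_equal; apply/funext => N; apply: eq_bigr => t _.
  by rewrite (@exp_eq R n S A P xi i p p' s0 t h hp hp' kv h2).
lra.
Qed.
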